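(* On the unit sphere with spherical coordinates $(\varphi,\theta)$ (longitude $\varphi$, polar angle $\theta$, metric $\sin^2\theta\,d\varphi^2+d\theta^2$), let $0<R<\pi/2$ and let $\gamma_\varepsilon(t)=(t+\varepsilon u(t),\,R+\varepsilon v(t))$ be an infinitesimal deformation of the circle of latitude $\gamma_0(t)=(t,R)$, where $u,v$ are smooth $2\pi$-periodic functions. Fix $\alpha\in(0,\pi)$ and define $f_\varepsilon(t)\in(0,\pi)$ by $\sin\alpha\cot f_\varepsilon(t)=\kappa_\varepsilon(t)$, where $\kappa_\varepsilon(t)$ is the geodesic curvature of $\gamma_\varepsilon$ at $\gamma_\varepsilon(t)$, and write $f_\varepsilon(t)=f_0+\varepsilon g(t)+O(\varepsilon^2)$. Then $g$ is $L^2$-orthogonal to the first harmonics: $\int_0^{2\pi}g(t)\cos t\,dt=\int_0^{2\pi}g(t)\sin t\,dt=0$.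
   Context: All quantities are computed to first order in $\varepsilon$. $f_0$ is the constant with $\sin\alpha\cot f_0=\cot R$, the geodesic curvature of the circle $\gamma_0$. *)

(* Defs.v *)
From Stdlib Require Import Reals.
From Coquelicot Require Import Coquelicot.
Open Scope R_scope.

(* The curve is embedded in R^3 via
     c(s) = (sin th cos phi, sin th sin phi, cos th),
   and kappa = det(c, c', c'') / |c'|^3, i.e. the geodesic curvature with
   respect to the unit normal c x (c'/|c'|).  For the latitude circle
   (t, r) this gives cot r. *)
Definition geod_curv (phi th : R -> R) (t : R) : R :=
  let x := fun s => sin (th s) * cos (phi s) in
  let y := fun s => sin (th s) * sin (phi s) in
  let z := fun s => cos (th s) in
  let x0 := x t in let y0 := y t in let z0 := z t in
  let x1 := Derive x t in let y1 := Derive y t in let z1 := Derive z t in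
  let x2 := Derive (Derive x) t in let y2 := Derive (Derive y) t in
  let z2 := Derive (Derive z) t in
  (x0 * (y1 * z2 - z1 * y2) - y0 * (x1 * z2 - z1 * x2) + z0 * (x1 * y2 - y1 * x2))
  / (sqrt (x1 ^ 2 + y1 ^ 2 + z1 ^ 2)) ^ 3.

(* Main.v *)
Require Import Defs.
From Stdlib Require Import Reals.
From Coquelicot Require Import Coquelicot.
From Stdlib Require Import Lra Nsatz FunctionalExtensionality.
Open Scope R_scope.


Lemma alg (sp cp st ct a b p q: R) : sp*sp+cp*cp=1 -> st*st+ct*ct=1 ->
  let x0 := st*cp in let y0 := st*sp in let z0 := ct in
  let x1 := ct*b*cp - st*sp*a in
  let y1 := ct*b*sp + st*cp*a in
  let z1 := - st*b in
  let x2 := (-st*b*b + ct*q)*cp - ct*b*sp*a - (ct*b*sp*a + st*cp*a*a + st*sp*p) in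
  let y2 := (-st*b*b + ct*q)*sp + ct*b*cp*a + (ct*b*cp*a - st*sp*a*a + st*cp*p) in
  let z2 := -ct*b*b - st*q in
  (x0 * (y1 * z2 - z1 * y2) - y0 * (x1 * z2 - z1 * x2) + z0 * (x1 * y2 - y1 * x2))
  = b * (2*ct*b*a + st*p) - st*a*(q - st*ct*a*a) /\
  x1*x1+y1*y1+z1*z1 = b*b + st*st*a*a.
Proof. intros H1 H2. cbv zeta. split; nsatz. Qed.

Ltac fixD := repeat match goal with
 | H : forall s : _, is_derive ?g s _ |- context [Derive ?f ?x] =>
    rewrite (is_derive_unique f x _ (H x))
 | H : is_derive ?g _ _ |- context [Derive ?f ?x] =>
    rewrite (is_derive_unique f x _ H) end.

Lemma geod_curv_formula (phi th dphi dth : R -> R) (ddphi ddth t : R) :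
 (forall s, is_derive phi s (dphi s)) -> (forall s, is_derive th s (dth s)) ->
 is_derive dphi t ddphi -> is_derive dth t ddth ->
 geod_curv phi th t =
  (dth t * (2*cos(th t)*dth t*dphi t + sin(th t)*ddphi)
   - sin (th t) * dphi t * (ddth - sin(th t)*cos(th t)*(dphi t*dphi t)))
  / (sqrt (dth t*dth t + sin(th t)*sin(th t) * (dphi t * dphi t)))^3.
Proof.
intros Hp Ht Hp2 Ht2.
unfold geod_curv; cbv zeta.
assert (Ex : Derive (fun s => sin (th s) * cos (phi s)) =
  fun s => cos(th s)*dth s*cos(phi s) - sin(th s)*sin(phi s)*dphi s).
{ apply functional_extensionality; intro s. apply is_derive_unique.
  auto_derive. repeat split; eexists; eauto.
  fixD. ring. }
assert (Ey : Derive (fun s => sin (th s) * sin (phi s)) =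
  fun s => cos(th s)*dth s*sin(phi s) + sin(th s)*cos(phi s)*dphi s).
{ apply functional_extensionality; intro s. apply is_derive_unique.
  auto_derive. repeat split; eexists; eauto.
  fixD. ring. }
assert (Ez : Derive (fun s => cos (th s)) = fun s => - sin(th s)*dth s).
{ apply functional_extensionality; intro s. apply is_derive_unique.
  auto_derive. repeat split; eexists; eauto.
  fixD. ring. }
rewrite Ex, Ey, Ez.
assert (Dth : Derive th t = dth t) by (apply is_derive_unique; auto).
assert (Dph : Derive phi t = dphi t) by (apply is_derive_unique; auto).
assert (Dth2 : Derive dth t = ddth) by (apply is_derive_unique; auto).
assert (Dph2 : Derive dphi t = ddphi) by (apply is_derive_unique; auto).
assert (Ex2 : Derive (fun s => cos(th s)*dth s*cos(phi s) - sin(th s)*sin(phi s)*dphi s) t =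
   (-sin (th t)*dth t*dth t + cos (th t)*ddth)*cos (phi t) - cos (th t)*dth t*sin (phi t)*dphi t - (cos (th t)*dth t*sin (phi t)*dphi t + sin (th t)*cos (phi t)*dphi t*dphi t + sin (th t)*sin (phi t)*ddphi)).
{ apply is_derive_unique. auto_derive.
  repeat split; eexists; eauto.
  fixD. ring. }
assert (Ey2 : Derive (fun s => cos(th s)*dth s*sin(phi s) + sin(th s)*cos(phi s)*dphi s) t =
   (-sin (th t)*dth t*dth t + cos (th t)*ddth)*sin (phi t) + cos (th t)*dth t*cos (phi t)*dphi t + (cos (th t)*dth t*cos (phi t)*dphi t - sin (th t)*sin (phi t)*dphi t*dphi t + sin (th t)*cos (phi t)*ddphi)).
{ apply is_derive_unique. auto_derive.
  repeat split; eexists; eauto.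
  fixD. ring. }
assert (Ez2 : Derive (fun s => - sin(th s)*dth s) t = -cos (th t)*dth t*dth t - sin (th t)*ddth).
{ apply is_derive_unique. auto_derive.
  repeat split; eexists; eauto.
  fixD. ring. }
rewrite Ex2, Ey2, Ez2.
destruct (alg (sin (phi t)) (cos (phi t)) (sin (th t)) (cos (th t)) (dphi t) (dth t) ddphi ddth)
  as [A B].
- rewrite <- (sin2_cos2 (phi t)); unfold Rsqr; ring.
- rewrite <- (sin2_cos2 (th t)); unfold Rsqr; ring.
- cbv zeta in A, B.
  replace ((cos (th t) * dth t * cos (phi t) - sin (th t) * sin (phi t) * dphi t) ^ 2 +
     (cos (th t) * dth t * sin (phi t) + sin (th t) * cos (phi t) * dphi t) ^ 2 +
     (- sin (th t) * dth t) ^ 2) with (dth t*dth t + sin(th t)*sin(th t) * (dphi t * dphi t))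
   by (transitivity (dth t * dth t + sin (th t) * sin (th t) * dphi t * dphi t); [ring | rewrite <- B; ring]).
  f_equal. etransitivity; [exact A|]. ring.
Qed.

Definition K (r v0 v1 v2 u1 u2 e : R) :=
  (e*v1 * (2*cos(r+e*v0)*(e*v1)*(1+e*u1) + sin(r+e*v0)*(e*u2))
   - sin (r+e*v0) * (1+e*u1) * (e*v2 - sin(r+e*v0)*cos(r+e*v0)*((1+e*u1)*(1+e*u1))))
  / (sqrt ((e*v1)*(e*v1) + sin(r+e*v0)*sin(r+e*v0) * ((1+e*u1) * (1+e*u1))))^3.
Lemma K_der r v0 v1 v2 u1 u2 : 0 < r < PI/2 ->
  is_derive (K r v0 v1 v2 u1 u2) 0 (-(v2+v0)/(sin r * sin r)).
Proof. intros Hr. assert (Hs : 0 < sin r) by (apply sin_gt_0; lra).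
unfold K. auto_derive;
 replace (r + 0 * v0) with r by ring;
 replace (0 * v1 * (0 * v1) + sin r * sin r * ((1 + 0 * u1) * (1 + 0 * u1))) with (sin r * sin r) by ring;
 rewrite sqrt_square by lra.
- split; [apply Rmult_lt_0_compat; lra | split; [|trivial]]. apply Rgt_not_eq. repeat apply Rmult_lt_0_compat; lra.
- transitivity (-(v2+v0)/(sin r * sin r) - v0*(cos r * cos r + sin r * sin r - 1)/(sin r * sin r)).
  + field. lra.
  + rewrite (Rplus_comm (cos r * cos r)). change (sin r * sin r) with (Rsqr (sin r)) at 2.
    change (cos r * cos r) with (Rsqr (cos r)). rewrite sin2_cos2. field. lra.
Qed.
Lemma K0 r v0 v1 v2 u1 u2 : 0 < r < PI/2 -> K r v0 v1 v2 u1 u2 0 = cos r / sin r.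
Proof. intros Hr. assert (Hs : 0 < sin r) by (apply sin_gt_0; lra).
unfold K. replace (r + 0 * v0) with r by ring.
 replace (0 * v1 * (0 * v1) + sin r * sin r * ((1 + 0 * u1) * (1 + 0 * u1))) with (sin r * sin r) by ring.
 rewrite sqrt_square by lra. field. lra. Qed.

Lemma cot_der (f: R -> R -> R) (g : R -> R) t a :
  is_derive (fun e => f e t) 0 (g t) -> sin (f 0 t) <> 0 ->
  is_derive (fun e => sin a * (cos (f e t) / sin (f e t))) 0 (sin a * (-(g t)) / (sin (f 0 t) * sin (f 0 t))).
Proof.
intros H H0. auto_derive.
- repeat split; auto; eexists; eauto.
- fixD.
  transitivity (sin a * - g t * (Rsqr (sin (f 0 t)) + Rsqr (cos (f 0 t))) / (sin (f 0 t) * sin (f 0 t))).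
  + unfold Rsqr. field. auto.
  + rewrite sin2_cos2. field. auto.
Qed.

Lemma der1 (u : R -> R) : (forall (n : nat) (t : R), ex_derive_n u n t) ->
  forall s, is_derive u s (Derive u s).
Proof. intros H s. apply Derive_correct. exact (H 1%nat s). Qed.
Lemma der2 (u : R -> R) : (forall (n : nat) (t : R), ex_derive_n u n t) ->
  forall s, is_derive (Derive u) s (Derive (Derive u) s).
Proof. intros H s. apply Derive_correct. exact (H 2%nat s). Qed.
Lemma der3 (u : R -> R) : (forall (n : nat) (t : R), ex_derive_n u n t) ->
  forall s, is_derive (Derive (Derive u)) s (Derive (Derive (Derive u)) s).
Proof. intros H s. apply Derive_correct. exact (H 3%nat s). Qed.

Lemma kappa_eq (r : R) (u v : R -> R) e t :
  (forall (n : nat) (t : R), ex_derive_n u n t) ->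
  (forall (n : nat) (t : R), ex_derive_n v n t) ->
  geod_curv (fun s => s + e * u s) (fun s => r + e * v s) t =
  K r (v t) (Derive v t) (Derive (Derive v) t) (Derive u t) (Derive (Derive u) t) e.
Proof.
intros Hu Hv.
pose proof (der1 u Hu) as Hu1. pose proof (der2 u Hu) as Hu2.
pose proof (der1 v Hv) as Hv1. pose proof (der2 v Hv) as Hv2.
rewrite (geod_curv_formula _ _ (fun s => 1 + e * Derive u s) (fun s => e * Derive v s)
   (e * Derive (Derive u) t) (e * Derive (Derive v) t)).
- unfold K. reflexivity.
- intro s. auto_derive; [eexists; eauto|]. fixD. ring.
- intro s. auto_derive; [eexists; eauto|]. fixD. ring.
- auto_derive; [eexists; eauto|]. fixD. ring.
- auto_derive; [eexists; eauto|]. fixD. ring.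
Qed.

Lemma per_der (v : R -> R) :
  (forall (n : nat) (t : R), ex_derive_n v n t) ->
  (forall t, v (t + 2 * PI) = v t) -> Derive v (0 + 2*PI) = Derive v 0.
Proof.
intros Hv Hp. pose proof (der1 v Hv) as Hv1.
assert (D : is_derive (fun s => v (s + 2*PI)) 0 (Derive v (0 + 2*PI))).
{ auto_derive; [eexists; eauto|]. fixD. ring. }
apply is_derive_ext with (g := v) in D; [| intro; apply Hp].
symmetry. apply is_derive_unique. exact D.
Qed.

Lemma is_RInt_eq (h : R -> R) a b (l l' : R) : is_RInt h a b l -> l = l' -> is_RInt h a b l'.
Proof. intros; subst; auto. Qed.

Theorem mainTheorem7 (r alpha : R) (u v : R -> R) (f : R -> R -> R) (g : R -> R) :
  0 < r < PI / 2 ->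
  0 < alpha < PI ->
  (forall (n : nat) (t : R), ex_derive_n u n t) ->
  (forall (n : nat) (t : R), ex_derive_n v n t) ->
  (forall t, u (t + 2 * PI) = u t) ->
  (forall t, v (t + 2 * PI) = v t) ->
  (forall e t, 0 < f e t < PI /\
     sin alpha * (cos (f e t) / sin (f e t)) =
       geod_curv (fun s => s + e * u s) (fun s => r + e * v s) t) ->
  (forall t, is_derive (fun e => f e t) 0 (g t)) ->
  is_RInt (fun t => g t * cos t) 0 (2 * PI) 0 /\
  is_RInt (fun t => g t * sin t) 0 (2 * PI) 0.
Proof.
intros Hr Ha Hu Hv Hpu Hpv Hf Hg.
assert (Hs : 0 < sin r) by (apply sin_gt_0; lra).
assert (Hsa : 0 < sin alpha) by (apply sin_gt_0; lra).
set (D := cos r * cos r + sin alpha * sin alpha * (sin r * sin r)).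
assert (HD : 0 < D).
{ unfold D. assert (0 < sin alpha * sin alpha * (sin r * sin r)).
  { repeat apply Rmult_lt_0_compat; lra. } nra. }
set (Cc := sin alpha / D).
assert (Hgw : forall t, g t = Cc * (Derive (Derive v) t + v t)).
{ intro t.
  assert (HS : 0 < sin (f 0 t)) by (apply sin_gt_0; apply Hf).
  assert (E0 := proj2 (Hf 0 t)). rewrite kappa_eq, K0 in E0 by auto.
  assert (G := cot_der f g t alpha (Hg t) ltac:(lra)).
  assert (G' : is_derive (K r (v t) (Derive v t) (Derive (Derive v) t) (Derive u t) (Derive (Derive u) t)) 0
          (sin alpha * (-(g t)) / (sin (f 0 t) * sin (f 0 t)))).
  { apply is_derive_ext with (2 := G). intro e. rewrite (proj2 (Hf e t)). apply kappa_eq; auto. }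
  pose proof (is_derive_unique _ _ _ G') as E1.
  rewrite (is_derive_unique _ _ _ (K_der r (v t) (Derive v t) (Derive (Derive v) t) (Derive u t) (Derive (Derive u) t) Hr)) in E1.
  set (S := sin (f 0 t)) in *. set (C := cos (f 0 t)) in *.
  set (w := Derive (Derive v) t + v t).
  set (s := sin r) in *. set (c := cos r) in *. set (sa := sin alpha) in *.
  assert (E1' : sa * g t * (s * s) = S * S * w).
  { apply (Rmult_eq_reg_r (/ (S*S*(s*s)))).
    2: { apply Rinv_neq_0_compat. apply Rgt_not_eq. repeat apply Rmult_lt_0_compat; lra. }
    transitivity (- (sa * - g t / (S*S))). field; split; lra.
    unfold w. rewrite <- E1. field. split; lra. }
  assert (E2 : sa * C * s = c * S).
  { apply (Rmult_eq_reg_r (/ (S * s))).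
    2: { apply Rinv_neq_0_compat. apply Rgt_not_eq. repeat apply Rmult_lt_0_compat; lra. }
    transitivity (sa * (C / S)). field; split; lra. rewrite E0. field; split; lra. }
  assert (P : S * S + C * C = 1) by (unfold S, C; rewrite <- (sin2_cos2 (f 0 t)); unfold Rsqr; ring).
  assert (E3 : S * S * D = sa * sa * (s * s)).
  { unfold D. fold c s sa. nsatz. }
  assert (E4 : g t * D = sa * w).
  { apply (Rmult_eq_reg_r (sa * (s * s))).
    2: { apply Rgt_not_eq. repeat apply Rmult_lt_0_compat; lra. }
    transitivity ((sa * g t * (s * s)) * D). ring. rewrite E1'.
    transitivity ((S * S * D) * w). ring. rewrite E3. ring. }
  unfold Cc. fold sa w. apply (Rmult_eq_reg_r D); [|lra].
  rewrite E4. field. lra. }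
pose proof (der1 v Hv) as Hv1. pose proof (der2 v Hv) as Hv2. pose proof (der3 v Hv) as Hv3.
assert (Pv : v (2*PI) = v 0) by (rewrite <- (Hpv 0); f_equal; ring).
assert (Pv1 : Derive v (2*PI) = Derive v 0) by (rewrite <- (per_der v Hv Hpv); f_equal; ring).
assert (Cont : forall (h : R -> R) x, (forall y, is_derive h y (Derive h y)) ->
   continuous (fun t => g t * h t) x).
{ intros h x Hh. apply continuous_ext with (f := fun t => Cc * (Derive (Derive v) t + v t) * h t).
  { intro y. rewrite Hgw. reflexivity. }
  apply (ex_derive_continuous (K:=R_AbsRing) (V:=R_NormedModule)). auto_derive. repeat split; eexists; eauto. }
split.
- assert (I := is_RInt_derive (fun t => Cc * (Derive v t * cos t + v t * sin t)) (fun t => g t * cos t) 0 (2*PI)).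
  eapply is_RInt_eq; [apply I| unfold minus, plus, opp; simpl; rewrite Pv, Pv1, cos_2PI, sin_2PI, cos_0, sin_0; ring].
  + intros x _. auto_derive; [repeat split; eexists; eauto|]. fixD. rewrite Hgw. ring.
  + intros x _. apply Cont. intro y. apply Derive_correct. auto_derive. auto.
- assert (I := is_RInt_derive (fun t => Cc * (Derive v t * sin t - v t * cos t)) (fun t => g t * sin t) 0 (2*PI)).
  eapply is_RInt_eq; [apply I| unfold minus, plus, opp; simpl; rewrite Pv, Pv1, cos_2PI, sin_2PI, cos_0, sin_0; ring].
  + intros x _. auto_derive; [repeat split; eexists; eauto|]. fixD. rewrite Hgw. ring.
  + intros x _. apply Cont. intro y. apply Derive_correct. auto_derive. auto.
Qed.
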